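(* Let $j_1,j_2\in\tfrac12\mathbb{N}^+$ and write $R^{(j_1,j_2)}(t)$ as a $(2j_1+1)\times(2j_1+1)$ block matrix with blocks of size $(2j_2+1)\times(2j_2+1)$. Then for $1\le a,b\le 2j_1+1$ the $(a,b)$-block is an $(a-b)$-diagonal matrix if $|a-b|\le 2j_2$, and is zero if $|a-b|\ge 2j_2+1$. Here a square matrix is called $c$-diagonal if its $(i,k)$-entry is zero whenever $k-i\ne c$.
   Context: $\mathbb{F}$ is a field of characteristic zero in which every element has a square root; $q\in\mathbb{F}$ nonzero, not a root of unity, with fixed square root $q^{1/2}$ ($q^{k/2}:=(q^{1/2})^k$); other $(\cdot)^{1/2}$ are fixed square roots in $\mathbb{F}$. $[n]_q=\frac{q^n-q^{-n}}{q-q^{-1}}$, $c(t)=t-t^{-1}$, $\tfrac12\mathbb{N}^+=\{\tfrac12,1,\tfrac32,\dots\}$, $t$ an indeterminate, $\otimes$ Kronecker product. Leg notation: for factors $\mathbb{F}^{n_1}\otimes\mathbb{F}^{n_2}\otimes\mathbb{F}^{n_3}$, $X_{12}=X\otimes I_{n_3}$, $X_{23}=I_{n_1}\otimes X$, $X_{13}=P(X\otimes I_{n_2})P$ with $P$ the flip of factors 2,3; for non-square $Y$, $Y_{12}=Y\otimes I_{n_3}$, $Y_{23}=I_{n_1}\otimes Y$. For $j\in\tfrac12\mathbb{N}^+$: $\mathcal{E}^{(j+\frac12)}$ is $(4j+2)\times(2j+2)$ with only nonzero entries $\mathcal{E}_{(a,a)}=\big(\frac{[2j+2-a]_q}{[2j+1]_q}\big)^{1/2}$,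 $\mathcal{E}_{(a+2j+1,a+1)}=\big(\frac{[a]_q}{[2j+1]_q}\big)^{1/2}$ ($1\le a\le 2j+1$); $\mathcal{F}^{(j+\frac12)}$ is $(2j+2)\times(4j+2)$ with only nonzero entries $\mathcal{F}_{(a,a)}=\frac{([2j+2-a]_q[2j+1]_q)^{1/2}}{[2j+2-a]_q+[a-1]_q}$, $\mathcal{F}_{(a+1,a+2j+1)}=\frac{([a]_q[2j+1]_q)^{1/2}}{[2j+1-a]_q+[a]_q}$ ($1\le a\le 2j+1$). $R^{(\frac12,\frac12)}(t)$ is the $4\times4$ matrix with rows $(c(qt),0,0,0),(0,c(t),c(q),0),(0,c(q),c(t),0),(0,0,0,c(qt))$; recursively $R^{(\frac12,j+\frac12)}(t)=\mathcal{F}^{(j+\frac12)}_{23}R^{(\frac12,j)}_{13}(q^{-1/2}t)R^{(\frac12,\frac12)}_{12}(q^{j}t)\mathcal{E}^{(j+\frac12)}_{23}$ (factor sizes $2,2,2j+1$) and $R^{(j_1+\frac12,j_2)}(t)=\mathcal{F}^{(j_1+\frac12)}_{12}R^{(\frac12,j_2)}_{13}(q^{-j_1}t)R^{(j_1,j_2)}_{23}(q^{1/2}t)\mathcal{E}^{(j_1+\frac12)}_{12}$ (factor sizes $2,2j_1+1,2j_2+1$). *)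

(* Defs.v *)
From HB Require Import structures.
From mathcomp Require Import all_boot all_order all_algebra.
From mathcomp Require Import fraction mxtens.
Set Implicit Arguments.
Unset Strict Implicit.
Unset Printing Implicit Defensive.
Import Order.TTheory GRing.Theory Num.Theory.
Local Open Scope ring_scope.

(* Kronecker product: mxtens.tensmx (A *t B), with the standard row-major
   index convention  mxtens_index (i, j) = i * p + j. *)
Notation "A *t B" := (tensmx A B) (at level 40, left associativity).

Section Leg.
Variable K : fieldType.

(* leg notation on F^{n1} (x) F^{n2} (x) F^{n3}, indices as (n1*n2)*n3 *)
Definition leg12 {n1 n2 n3 : nat} (X : 'M[K]_(n1 * n2)) : 'M[K]_(n1 * n2 * n3) :=
  X *t (1%:M : 'M[K]_n3).

Definition leg23 {n1 n2 n3 : nat} (X : 'M[K]_(n2 * n3)) : 'M[K]_(n1 * n2 * n3) :=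
  castmx (mulnA n1 n2 n3, mulnA n1 n2 n3) ((1%:M : 'M[K]_n1) *t X).

Definition legY12 {p r n3 : nat} (Y : 'M[K]_(p, r)) : 'M[K]_(p * n3, r * n3) :=
  Y *t (1%:M : 'M[K]_n3).

Definition legY23_in {n1 n2 n3 r : nat} (Y : 'M[K]_(n2 * n3, r))
  : 'M[K]_(n1 * n2 * n3, n1 * r) :=
  castmx (mulnA n1 n2 n3, erefl _) ((1%:M : 'M[K]_n1) *t Y).

Definition legY23_out {n1 n2 n3 r : nat} (Y : 'M[K]_(r, n2 * n3))
  : 'M[K]_(n1 * r, n1 * n2 * n3) :=
  castmx (erefl _, mulnA n1 n2 n3) ((1%:M : 'M[K]_n1) *t Y).

Definition flip23 (n1 n2 n3 : nat) : 'M[K]_(n1 * n2 * n3, n1 * n3 * n2) :=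
  \matrix_(i, k)
    (let: (i12, i3) := mxtens_unindex i in
     let: (i1, i2) := mxtens_unindex i12 in
     let: (k13, k2) := mxtens_unindex k in
     let: (k1, k3) := mxtens_unindex k13 in
     ((i1 == k1) && (i2 == k2) && (i3 == k3))%:R).

Definition leg13 {n1 n2 n3 : nat} (X : 'M[K]_(n1 * n3)) : 'M[K]_(n1 * n2 * n3) :=
  flip23 n1 n2 n3 *m (X *t (1%:M : 'M[K]_n2)) *m (flip23 n1 n2 n3)^T.

End Leg.

Section Rmatrix.
Variable F : fieldType.
(* q, its fixed square root qh = q^{1/2}, and the fixed square-root function sq *)
Variables (q qh : F) (sq : F -> F).

Definition qint (n : nat) : F := (q ^+ n - q ^- n) / (q - q^-1).

(* E^{(j+1/2)} with D = 2j+1 : a (2D) x (D+1) matrix; entries indexed 1-based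
   as in the paper: a = i+1 (row), b = k+1 (column). *)
Definition Emx (D : nat) : 'M[F]_(2 * D, D.+1) :=
  \matrix_(i, k)
    (let a := i.+1 in let b := k.+1 in
     if ((a == b) && (a <= D))%N then sq (qint (D.+1 - a) / qint D)
     else if ((2 <= b) && (b.-1 <= D) && (a == b.-1 + D))%N then sq (qint b.-1 / qint D)
     else 0).

(* F^{(j+1/2)} with D = 2j+1 : a (D+1) x (2D) matrix. *)
Definition Fmx (D : nat) : 'M[F]_(D.+1, 2 * D) :=
  \matrix_(i, k)
    (let a := i.+1 in let b := k.+1 in
     if ((a == b) && (a <= D))%N then
       sq (qint (D.+1 - a) * qint D) / (qint (D.+1 - a) + qint a.-1)
     else if ((2 <= a) && (a.-1 <= D) && (b == a.-1 + D))%N then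
       sq (qint a.-1 * qint D) / (qint (D - a.-1) + qint a.-1)
     else 0).

Definition K := {fraction {poly F}}.
Definition iota (x : F) : K := tofrac (x%:P).
Definition tK : K := tofrac 'X.
Definition cf (x : K) : K := x - x^-1.

Definition R0 (t : K) : 'M[K]_(2 * 2) :=
  \matrix_(i, k)
    (if (i == k) && ((i == 0%N :> nat) || (i == 3%N :> nat)) then cf (iota q * t)
     else if (i == k) then cf t
     else if ((i == 1%N :> nat) && (k == 2%N :> nat)) || ((i == 2%N :> nat) && (k == 1%N :> nat))
     then cf (iota q) else 0).

(* Rhalf m t = R^{(1/2, j)}(t) with 2j = m+1 (size 2 * (2j+1)). *)
Fixpoint Rhalf (m : nat) : K -> 'M[K]_(2 * m.+2) :=
  match m with
  | 0 => R0
  | m'.+1 => fun t =>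
      legY23_out (n1 := 2) (n2 := 2) (n3 := m'.+2) (map_mx iota (Fmx m'.+2))
      *m leg13 (n1 := 2) (n2 := 2) (n3 := m'.+2) (Rhalf m' ((iota qh)^-1 * t))
      *m leg12 (n1 := 2) (n2 := 2) (n3 := m'.+2) (R0 (iota (qh ^+ m'.+1) * t))
      *m legY23_in (n1 := 2) (n2 := 2) (n3 := m'.+2) (map_mx iota (Emx m'.+2))
  end.

(* Rfull m1 m2 t = R^{(j1, j2)}(t) with 2 j1 = m1+1, 2 j2 = m2+1. *)
Fixpoint Rfull (m1 m2 : nat) : K -> 'M[K]_(m1.+2 * m2.+2) :=
  match m1 with
  | 0 => Rhalf m2
  | m1'.+1 => fun t =>
      legY12 (n3 := m2.+2) (map_mx iota (Fmx m1'.+2))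
      *m leg13 (n1 := 2) (n2 := m1'.+2) (n3 := m2.+2)
           (Rhalf m2 ((iota (qh ^+ m1'.+1))^-1 * t))
      *m leg23 (n1 := 2) (n2 := m1'.+2) (n3 := m2.+2) (Rfull m1' m2 (iota qh * t))
      *m legY12 (n3 := m2.+2) (map_mx iota (Emx m1'.+2))
  end.

End Rmatrix.

Definition block {T : Type} {n1 n2 : nat} (M : 'M[T]_(n1 * n2)) (a b : 'I_n1)
  : 'M[T]_n2 :=
  \matrix_(i, k) M (mxtens_index (a, i)) (mxtens_index (b, k)).

Definition cdiag {R : nzRingType} {n : nat} (c : int) (M : 'M[R]_n) : Prop :=
  forall i k : 'I_n, (k%:Z - i%:Z != c) -> M i k = 0.

(* Main.v *)
Require Import Defs.
From HB Require Import structures.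
From mathcomp Require Import all_boot all_order all_algebra.
From mathcomp Require Import fraction mxtens.
From mathcomp Require Import zify.
Import Order.TTheory GRing.Theory Num.Theory.
Local Open Scope ring_scope.
Set Implicit Arguments.
Unset Strict Implicit.

Definition wp {R : nzRingType} {m n : nat} (wr wc : nat -> nat) (M : 'M[R]_(m, n)) :=
  forall (i : 'I_m) (j : 'I_n), wr i != wc j -> M i j = 0.

Definition W2 (n x : nat) : nat := (x %/ n + x %% n)%N.
Definition W3 (n2 n3 x : nat) : nat := (x %/ n3 %/ n2 + x %/ n3 %% n2 + x %% n3)%N.

Lemma W2E D a b : (b < D)%N -> W2 D (a * D + b) = (a + b)%N.
Proof.
move=> hb; have D0 : (0 < D)%N by apply: leq_ltn_trans hb.
by rewrite /W2 divnMDl // divn_small // modnMDl modn_small // addn0.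
Qed.

Lemma W23 n2 n3 x : (x %/ (n2 * n3) + W2 n3 (x %% (n2 * n3)))%N = W3 n2 n3 x.
Proof.
rewrite /W2 /W3 -modn_divl modn_dvdm ?dvdn_mull // mulnC divnMA.
by rewrite addnA.
Qed.

Section WP.
Variable R : fieldType.

Lemma wp_ext m n (wr wc wr' wc' : nat -> nat) (M : 'M[R]_(m, n)) :
  wp wr wc M -> (forall i : 'I_m, wr i = wr' i) -> (forall j : 'I_n, wc j = wc' j) ->
  wp wr' wc' M.
Proof. by move=> H er ec i j; rewrite -er -ec; apply: H. Qed.

Lemma wp_mul m n p (wr wm wc : nat -> nat) (A : 'M[R]_(m, n)) (B : 'M[R]_(n, p)) :
  wp wr wm A -> wp wm wc B -> wp wr wc (A *m B).
Proof.
move=> HA HB i j H; rewrite mxE big1 // => k _.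
case: (eqVneq (wr i) (wm k)) => e.
  by rewrite (HB k j) ?mulr0 // -e.
by rewrite HA ?mul0r.
Qed.

Lemma wp_tr m n (wr wc : nat -> nat) (A : 'M[R]_(m, n)) :
  wp wr wc A -> wp wc wr A^T.
Proof. by move=> HA i j H; rewrite mxE HA // eq_sym. Qed.

Lemma wp_cast m n m' n' (e : (m = m') * (n = n')) (wr wc : nat -> nat) (A : 'M[R]_(m, n)) :
  wp wr wc A -> wp wr wc (castmx e A).
Proof. by move=> HA i j H; rewrite castmxE HA. Qed.

Lemma wp_id n (w : nat -> nat) : wp w w (1%:M : 'M[R]_n).
Proof.
move=> i j H; rewrite mxE; case: eqP => // e; by rewrite e eqxx in H.
Qed.

Lemma mxtens_index_val m n (i : 'I_m) (j : 'I_n) :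
  (mxtens_index (i, j) : nat) = (i * n + j)%N.
Proof. by []. Qed.

Lemma wp_tens m n p r (wr wc vr vc : nat -> nat) (A : 'M[R]_(m, n)) (B : 'M[R]_(p, r)) :
  wp wr wc A -> wp vr vc B ->
  wp (fun x => wr (x %/ p) + vr (x %% p))%N (fun x => wc (x %/ r) + vc (x %% r))%N (A *t B).
Proof.
move=> HA HB i j.
case: (mxtens_indexP i) => i1 i2; case: (mxtens_indexP j) => j1 j2.
rewrite !mxtens_index_val tensmxE.
have p0 : (0 < p)%N by case: (p) i2 => [[]|].
have r0 : (0 < r)%N by case: (r) j2 => [[]|].
rewrite !divnMDl // !divn_small // !modnMDl !modn_small // !addn0 => H.
case: (eqVneq (wr i1) (wc j1)) => e.
  by rewrite (HB i2 j2) ?mulr0 //; apply: contra H => /eqP ->; rewrite e.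
by rewrite HA ?mul0r.
Qed.

Lemma wp_flip n1 n2 n3 : wp (W3 n2 n3) (W3 n3 n2) (flip23 R n1 n2 n3).
Proof.
move=> i k H; rewrite mxE /=.
case: eqP => [e1|]; last by rewrite /= mulr0n.
case: eqP => [e2|]; last by rewrite /= mulr0n.
case: eqP => [e3|]; last by rewrite /= mulr0n.
exfalso; move: H; rewrite /W3.
move: (congr1 val e1) (congr1 val e2) (congr1 val e3) => /= -> -> ->.
by rewrite -addnA [(_ %% n2 + _)%N]addnC addnA eqxx.
Qed.

End WP.
Section Legs.
Variable R : fieldType.

Lemma wp_leg12 n1 n2 n3 (X : 'M[R]_(n1 * n2)) :
  wp (W2 n2) (W2 n2) X -> wp (W3 n2 n3) (W3 n2 n3) (leg12 (n3 := n3) X).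
Proof.
move=> HX; apply: (wp_ext (wp_tens HX ((@wp_id R n3 id)))) => i //.
Qed.

Lemma wp_leg23 n1 n2 n3 (X : 'M[R]_(n2 * n3)) :
  wp (W2 n3) (W2 n3) X -> wp (W3 n2 n3) (W3 n2 n3) (leg23 (n1 := n1) X).
Proof.
move=> HX; apply: wp_cast.
by apply: (wp_ext (wp_tens ((@wp_id R n1 id)) HX)) => i /=; rewrite W23.
Qed.

Lemma wp_leg13 n1 n2 n3 (X : 'M[R]_(n1 * n3)) :
  wp (W2 n3) (W2 n3) X -> wp (W3 n2 n3) (W3 n2 n3) (leg13 (n2 := n2) X).
Proof.
move=> HX; apply: wp_mul; last by apply: wp_tr; apply: wp_flip.
apply: wp_mul; first by apply: wp_flip.
by apply: (wp_ext (wp_tens HX ((@wp_id R n2 id)))) => i.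
Qed.

Lemma wp_legY12 p r n3 (wr wc : nat -> nat) (Y : 'M[R]_(p, r)) :
  wp wr wc Y -> wp (fun x => wr (x %/ n3) + x %% n3)%N (fun x => wc (x %/ n3) + x %% n3)%N
                   (legY12 (n3 := n3) Y).
Proof. by move=> HY; apply: (wp_tens HY ((@wp_id R n3 id))). Qed.

Lemma wp_legY23_out n1 n2 n3 r (Y : 'M[R]_(r, n2 * n3)) :
  wp id (W2 n3) Y -> wp (W2 r) (W3 n2 n3) (legY23_out (n1 := n1) Y).
Proof.
move=> HY; apply: wp_cast.
by apply: (wp_ext (wp_tens ((@wp_id R n1 id)) HY)) => i /=; rewrite ?W23.
Qed.

Lemma wp_legY23_in n1 n2 n3 r (Y : 'M[R]_(n2 * n3, r)) :
  wp (W2 n3) id Y -> wp (W3 n2 n3) (W2 r) (legY23_in (n1 := n1) Y).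
Proof.
move=> HY; apply: wp_cast.
by apply: (wp_ext (wp_tens ((@wp_id R n1 id)) HY)) => i /=; rewrite ?W23.
Qed.

End Legs.

Section RM.
Variable F : fieldType.
Variables (q qh : F) (sq : F -> F).

Lemma wp_map m n (wr wc : nat -> nat) (M : 'M[F]_(m, n)) :
  wp wr wc M -> wp wr wc (map_mx (@Defs.iota F) M).
Proof. by move=> HM i j H; rewrite mxE HM // /Defs.iota polyC0 tofrac0. Qed.

Lemma wp_Emx D : wp (W2 D) id (Emx q sq D).
Proof.
move=> i k H; rewrite mxE /=.
case: ifP => [/andP[/eqP e le]|_].
  exfalso; move: H; have -> : (i : nat) = (0 * D + i)%N by [].
  rewrite W2E; last by lia.
  by move: e => /= [->]; rewrite eqxx.
case: ifP => [/andP[/andP[h2 hle] /eqP e]|_] //.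
exfalso; move: H; have -> : (i : nat) = (1 * D + k.-1)%N by lia.
rewrite W2E; last by lia.
by apply/negP; rewrite negbK; apply/eqP; lia.
Qed.

Lemma wp_Fmx D : wp id (W2 D) (Fmx q sq D).
Proof.
move=> i k H; rewrite mxE /=.
case: ifP => [/andP[/eqP e le]|_].
  exfalso; move: H; have -> : (k : nat) = (0 * D + k)%N by [].
  rewrite W2E; last by lia.
  by move: e => /= [->]; rewrite eqxx.
case: ifP => [/andP[/andP[h2 hle] /eqP e]|_] //.
exfalso; move: H; have -> : (k : nat) = (1 * D + i.-1)%N by lia.
rewrite W2E; last by lia.
by apply/negP; rewrite negbK; apply/eqP; lia.
Qed.

Lemma wp_R0 t : wp (W2 2) (W2 2) (R0 q t).
Proof.
move=> [i hi] [k hk] H; rewrite mxE /=.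
case: i hi H => [|[|[|[|i]]]] hi //; case: k hk => [|[|[|[|k]]]] hk //= H.
Qed.

End RM.
Lemma wp_Rhalf (F : fieldType) (q qh : F) (sq : F -> F) m :
  forall t, wp (W2 m.+2) (W2 m.+2) (Rhalf q qh sq m t).
Proof.
elim: m => [|m IH] t /=; first exact: wp_R0.
apply: wp_mul; last by apply: wp_legY23_in; apply: wp_map; apply: wp_Emx.
apply: wp_mul; last by apply: wp_leg12; apply: wp_R0.
apply: wp_mul; last by apply: wp_leg13; apply: IH.
by apply: wp_legY23_out; apply: wp_map; apply: wp_Fmx.
Qed.

Lemma wp_Rfull (F : fieldType) (q qh : F) (sq : F -> F) m1 m2 :
  forall t, wp (W2 m2.+2) (W2 m2.+2) (Rfull q qh sq m1 m2 t).
Proof.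
elim: m1 => [|m1 IH] t /=; first exact: wp_Rhalf.
apply: (@wp_mul _ _ _ _ _ (W3 m1.+2 m2.+2)); last first.
  have H := (wp_legY12 (n3 := m2.+2) (wp_map (@wp_Emx F q sq m1.+2))).
  apply: (wp_ext H) => //.
apply: wp_mul; last by apply: wp_leg23; apply: IH.
apply: wp_mul; last by apply: wp_leg13; apply: wp_Rhalf.
exact: (wp_ext (wp_legY12 (n3 := m2.+2) (wp_map (@wp_Fmx F q sq m1.+2)))).
Qed.

Theorem propositionA2 (F : fieldType)
  (char0 : [pchar F] =i pred0)
  (sq : F -> F) (sqP : forall x : F, sq x * sq x = x)
  (q qh : F) (q_neq0 : q != 0)
  (q_not_root_unity : forall n : nat, (0 < n)%N -> q ^+ n != 1)
  (qhP : qh * qh = q)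
  (m1 m2 : nat) (a b : 'I_(m1.+2)) :
  let B := block (n1 := m1.+2) (n2 := m2.+2) (Rfull q qh sq m1 m2 (tK F)) a b in
  (`|a%:Z - b%:Z| <= (m2.+1)%:Z -> cdiag (a%:Z - b%:Z) B) /\
  ((m2.+2)%:Z <= `|a%:Z - b%:Z| -> B = 0).
Proof.
move=> B.
have key : forall i k : 'I_(m2.+2), (a + i)%N != (b + k)%N -> B i k = 0.
  move=> i k H; rewrite /B /block mxE; apply: wp_Rfull.
  by rewrite !mxtens_index_val !W2E.
split.
  move=> _ i k H; apply: key; apply/eqP => e; move/eqP: H; apply; lia.
move=> H; apply/matrixP => i k; rewrite [RHS]mxE; apply: key; apply/eqP => e.
have hi := ltn_ord i; have hk := ltn_ord k.
move: H; rewrite lez_nat.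
lia.
Qed.
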